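(* For every Young diagram $\mu$ with $m=|\mu|$ and every $n\ge1$, $$(T_n-\mathbf 1)(FS_\mu)_n=-\frac{m(m-1+zz')}{(n+1)(zz'+n)}(FS_\mu)_n+\frac{n+1-m}{(n+1)(zz'+n)}\sum_{\mu_\bullet\nearrow\mu}(z)_{\mu/\mu_\bullet}(z')_{\mu/\mu_\bullet}(FS_{\mu_\bullet})_n.$$
   Context: $\mathbb Y$ is the set of all Young diagrams (including $\varnothing$), $\mathbb Y_n$ those with $n$ boxes, $|\lambda|$ the number of boxes; $\mu\nearrow\lambda$ (equivalently $\lambda\searrow\mu$) means $\mu\subset\lambda$, $|\lambda|=|\mu|+1$. For a skew diagram $\theta$, $(z)_\theta=\prod_{(i,j)\in\theta}(z+j-i)$ ($(i,j)$ = box in row $i$, column $j$). $\dim\lambda$ is the number of standard Young tableaux of shape $\lambda$ ($\dim\varnothing=1$); $\dim(\mu,\lambda)$ is the number of chains $\mu\nearrow\cdots\nearrow\lambda$. Modified Frobenius coordinates: $\lambda=(a_1,\dots,a_d\mid b_1,\dots,b_d)$, $d$ the number of diagonal boxes, $a_i=\lambda_i-i+\frac12$, $b_i=\lambda'_i-i+\frac12$. $(z,z')$ is fixed in the principal series ($z\notin\mathbb R$, $z'=\bar z$) or complementary series ($z,z'\in(N,N+1)$, $N\in\mathbb Z$). Down transition $p^\downarrow(\nu,\lambda)=\dim\lambda/\dim\nu$ if $\lambda\nearrow\nu$, else 0; up transition for $\lambda\in\mathbb Y_n$: $p^\uparrow(\lambda,\nu)=\frac{(z)_{\nu/\lambda}(z')_{\nu/\lambda}}{zz'+n}\frac{\dim\nu}{(n+1)\dim\lambda}$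 if $\nu\searrow\lambda$, else 0. $T_n$ acts on real functions $g$ on $\mathbb Y_n$ by $(T_ng)(\lambda)=\sum_{\nu\in\mathbb Y_{n+1}}p^\uparrow(\lambda,\nu)\sum_{\tilde\lambda\in\mathbb Y_n}p^\downarrow(\nu,\tilde\lambda)g(\tilde\lambda)$; $\mathbf 1$ is the identity. $\Lambda=\mathbb R[p_1,p_2,\dots]$ (symmetric functions) is viewed as functions on $\mathbb Y$ via $p_k(\lambda)=\sum_ia_i^k+(-1)^{k-1}\sum_ib_i^k$; $f_n$ is the restriction of $f\in\Lambda$ to $\mathbb Y_n$. $FS_\mu\in\Lambda$ is the Frobenius–Schur function, characterized by $FS_\mu(\lambda)=n^{\downarrow m}\dim(\mu,\lambda)/\dim\lambda$ for all $\lambda$ ($n=|\lambda|$, $m=|\mu|$, $n^{\downarrow m}=n(n-1)\cdots(n-m+1)$). *)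

(* Defs.v *)
From HB Require Import structures.
From mathcomp Require Import all_boot all_order all_algebra.
From mathcomp Require Export complex.
Set Implicit Arguments. Unset Strict Implicit. Unset Printing Implicit Defensive.
Import Order.TTheory GRing.Theory Num.Theory.
Local Open Scope ring_scope.

(* A Young diagram is the sequence of its (positive) row lengths, weakly
   decreasing.  |lambda| = sumn lambda. *)
Definition is_part (l : seq nat) : bool :=
  sorted geq l && all (fun x => 0 < x)%N l.

(* Y_n : the (duplicate-free) list of all Young diagrams with n boxes.
   Every such diagram has at most n rows, each of length at most n, so it is
   obtained from some n-tuple with entries <= n by deleting zeros. *)
Definition Yn (n : nat) : seq (seq nat) :=
  undup [seq l <- [seq [seq x <- map val (tval t) | (0 < x)%N]
                  | t : n.-tuple 'I_n.+1]
        | is_part l && (sumn l == n)].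

Definition subdiag (mu la : seq nat) : bool :=
  (size mu <= size la)%N && all (fun i => nth 0 mu i <= nth 0 la i)%N (iota 0 (size la)).

Definition nearrow (mu la : seq nat) : bool :=
  subdiag mu la && (sumn la == (sumn mu).+1).

Fixpoint dimk (k : nat) (mu la : seq nat) : nat :=
  match k with
  | 0 => nat_of_bool (mu == la)
  | k'.+1 => \sum_(ka <- Yn (sumn la).-1 | nearrow ka la) dimk k' mu ka
  end.

Definition dimc (mu la : seq nat) : nat :=
  if (sumn mu <= sumn la)%N then dimk (sumn la - sumn mu) mu la else 0.

Definition dimY (la : seq nat) : nat := dimc [::] la.

Section Kernels.
Variable F : fieldType.

(* (z)_{lambda/mu} = prod over boxes (i,j) of lambda/mu of (z + j - i);
   with 0-based indices i,j the box (i+1,j+1) has content j - i. *)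
Definition poch (z : F) (mu la : seq nat) : F :=
  \prod_(i < size la) \prod_(nth 0 mu i <= j < nth 0 la i) (z + j%:R - i%:R).

Definition FS (mu la : seq nat) : F :=
  ((sumn la) ^_ (sumn mu))%:R * (dimc mu la)%:R / (dimY la)%:R.

Definition pdown (nu la : seq nat) : F :=
  if nearrow la nu then (dimY la)%:R / (dimY nu)%:R else 0.

Definition pup (z z' : F) (la nu : seq nat) : F :=
  if nearrow la nu then
    poch z la nu * poch z' la nu / (z * z' + (sumn la)%:R)
    * (dimY nu)%:R / ((sumn la).+1%:R * (dimY la)%:R)
  else 0.

Definition Tn (z z' : F) (n : nat) (g : seq nat -> F) (la : seq nat) : F :=
  \sum_(nu <- Yn n.+1) pup z z' la nu * \sum_(lt <- Yn n) pdown nu lt * g lt.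
End Kernels.

Definition admissible (R : rcfType) (z z' : R[i]) : Prop :=
  (complex.Im z != 0 /\ z' = conjc z) \/
  (exists N : int, complex.Im z = 0 /\ complex.Im z' = 0 /\
     N%:~R < complex.Re z < (N + 1)%:~R /\ N%:~R < complex.Re z' < (N + 1)%:~R).

(* Main.v *)
Require Import Defs.
From HB Require Import structures.
From mathcomp Require Import all_boot all_order all_algebra.
From mathcomp Require Import complex.
From mathcomp Require Import zify ring lra.
Import Order.TTheory GRing.Theory Num.Theory.
Set Implicit Arguments. Unset Strict Implicit.

Section Part.
Local Open Scope nat_scope.

Lemma partP l : is_part l ->
  (forall i j, i <= j -> nth 0 l j <= nth 0 l i) /\
  (forall i, i < size l -> 0 < nth 0 l i).
Proof.
case/andP=> srt pos; split.
- move=> i j ij; case: (ltnP j (size l)) => jl.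
  + have il : i < size l by exact: leq_ltn_trans jl.
    have tr : transitive geq by move=> a b c h1 h2; exact: leq_trans h2 h1.
    exact: (sorted_leq_nth tr leqnn 0 srt).
  + by rewrite nth_default.
- by move=> i il; apply: (allP pos); apply: mem_nth.
Qed.

Lemma part_mon l i j : is_part l -> i <= j -> nth 0 l j <= nth 0 l i.
Proof. by move=> /partP[h _]; apply: h. Qed.

Lemma part_size i l : is_part l -> (i < size l) = (0 < nth 0 l i).
Proof.
move=> /partP[_ h]; case: (ltnP i (size l)) => il; first by rewrite h.
by rewrite nth_default.
Qed.

Lemma is_partI l : (forall i, nth 0 l i.+1 <= nth 0 l i) ->
  (forall i, i < size l -> 0 < nth 0 l i) -> is_part l.
Proof.
move=> mon pos; apply/andP; split.
- by apply/(sortedP 0) => i _; exact: mon.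
- by apply/(all_nthP 0) => i il; exact: pos.
Qed.

Lemma part_eq a b : is_part a -> is_part b ->
  (forall i, nth 0 a i = nth 0 b i) -> a = b.
Proof.
move=> pa pb e.
have hs i : (i < size a) = (i < size b) by rewrite (part_size i pa) (part_size i pb) e.
have sz : size a = size b.
  by have := hs (size a); have := hs (size b); rewrite !ltnn; lia.
by apply: (eq_from_nth (x0 := 0)) => // i _; apply: e.
Qed.

Lemma sumn_nth l N : size l <= N -> sumn l = \sum_(0 <= i < N) nth 0 l i.
Proof.
move=> hN; rewrite sumnE (big_nth 0) (big_cat_nat (leq0n _) hN) /=.
rewrite [X in _ + X]big1_seq ?addn0 // => i /andP[_]; rewrite mem_index_iota => /andP[h _].
by rewrite nth_default.
Qed.

Lemma nth_le_sumn l i : nth 0 l i <= sumn l.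
Proof.
elim: l i => [|x l IH] [|i] //=; first exact: leq_addr.
exact: leq_trans (IH i) (leq_addl _ _).
Qed.

Lemma size_le_sumn l : is_part l -> size l <= sumn l.
Proof.
move=> /andP[_]; elim: l => [|x l IH] //= /andP[x0 al].
by rewrite -addn1 addnC leq_add // IH.
Qed.

Lemma pw_sum_le a b : (forall i, nth 0 a i <= nth 0 b i) -> sumn a <= sumn b.
Proof.
move=> h; set N := maxn (size a) (size b).
rewrite (@sumn_nth a N) ?leq_maxl // (@sumn_nth b N) ?leq_maxr //.
by apply: leq_sum => i _.
Qed.

Lemma pw_sum_eq a b : (forall i, nth 0 a i <= nth 0 b i) -> sumn a = sumn b ->
  forall i, nth 0 a i = nth 0 b i.
Proof.
move=> h e i; set N := maxn (size a) (size b).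
case: (ltnP i N) => iN; last first.
  by rewrite !nth_default // (leq_trans _ iN) // ?leq_maxl ?leq_maxr.
move: e; rewrite (@sumn_nth a N) ?leq_maxl // (@sumn_nth b N) ?leq_maxr //.
have -> : \sum_(0 <= i < N) nth 0 b i = \sum_(0 <= i < N) nth 0 a i + \sum_(0 <= i < N) (nth 0 b i - nth 0 a i).
  by rewrite -big_split /=; apply: eq_bigr => j _; rewrite subnKC.
move/eqP; rewrite -{1}[\sum_(0 <= i < N) nth 0 a i]addn0 eqn_add2l eq_sym sum_nat_seq_eq0.
move/allP/(_ i); rewrite mem_index_iota iN /= => /(_ isT) /eqP.
by move: (h i); lia.
Qed.

Lemma pw_part_eq a b : is_part a -> is_part b ->
  (forall i, nth 0 a i <= nth 0 b i) -> sumn a = sumn b -> a = b.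
Proof. by move=> pa pb h e; apply: part_eq => //; apply: pw_sum_eq. Qed.

End Part.

Section Part2.
Local Open Scope nat_scope.

Definition lep (a b : seq nat) := forall i, nth 0 a i <= nth 0 b i.

Lemma subdiagP a b : is_part a -> reflect (lep a b) (subdiag a b).
Proof.
move=> pa; apply: (iffP andP) => [[sz /allP h] i|h].
- case: (ltnP i (size b)) => ib; first by apply: h; rewrite mem_iota.
  by rewrite (nth_default _ (leq_trans sz ib)).
- split; last by apply/allP => i _; exact: h i.
  rewrite leqNgt; apply/negP => lt.
  have := part_size (size b) pa; rewrite lt => /esym pos.
  have := h (size b); rewrite [nth 0 b _]nth_default // leqn0 => /eqP e.
  by rewrite e in pos.
Qed.

Lemma nearrowP a b : is_part a ->
  reflect (lep a b /\ sumn b = (sumn a).+1) (nearrow a b).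
Proof.
move=> pa; rewrite /nearrow; apply: (iffP andP).
- by case=> /(subdiagP _ pa) h /eqP e.
- by case=> h e; split; [apply/subdiagP | apply/eqP].
Qed.

Lemma memYn la n : (la \in Yn n) = is_part la && (sumn la == n).
Proof.
rewrite /Yn mem_undup mem_filter; apply/andP/idP => [[]//|h]; split => //.
case/andP: h => pl /eqP sl.
have hle i : nth 0 la i < n.+1 by rewrite ltnS -sl nth_le_sumn.
pose s := [seq (inord (nth 0 la i) : 'I_n.+1) | i <- iota 0 n].
have ss : size s == n by rewrite size_map size_iota.
apply/imageP; exists (Tuple ss) => //=.
have -> : map val s = [seq nth 0 la i | i <- iota 0 n].
  by rewrite -map_comp; apply: eq_map => i /=; rewrite inordK.
have szl := size_le_sumn pl; rewrite sl in szl.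
rewrite -(subnKC szl) iotaD map_cat filter_cat.
have -> : [seq nth 0 la i | i <- iota 0 (size la)] = la by exact: (mkseq_nth 0 la).
case/andP: (pl) => _ apos.
rewrite (all_filterP apos) add0n.
rewrite (@eq_in_filter _ _ pred0) ?filter_pred0 ?cats0 //.
move=> x /mapP[j]; rewrite mem_iota => /andP[hj _] ->.
by rewrite nth_default.
Qed.

Lemma Yn_uniq n : uniq (Yn n).
Proof. exact: undup_uniq. Qed.

Definition pof (f : nat -> nat) N := mkseq f (count (fun i => 0 < f i) (iota 0 N)).

Lemma mono_le (f : nat -> nat) : (forall i, f i.+1 <= f i) ->
  forall i j, i <= j -> f j <= f i.
Proof.
move=> mon i j; elim: j => [|j IH] ij; first by rewrite leqn0 in ij; move/eqP: ij => ->.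
case: (ltngtP i j.+1) ij => // [ij _|<- //].
exact: leq_trans (mon j) (IH ij).
Qed.

Lemma pof_count f N : (forall i, f i.+1 <= f i) ->
  forall i, i < N -> (0 < f i) = (i < count (fun j => 0 < f j) (iota 0 N)).
Proof.
move=> mon; elim: N => [//|N IH] i iN.
rewrite -[N.+1]addn1 iotaD count_cat /= addn0 add0n.
have cN : count (fun j => 0 < f j) (iota 0 N) <= N.
  by rewrite -{2}(size_iota 0 N) count_size.
case: (posnP (f N)) => [fN0 | fNp].
- rewrite -[_ + false]/(_ + 0) addn0.
  case: (ltnP i N) => [iN'|iN']; first by apply: IH.
  have -> : i = N by lia.
  by rewrite fN0 ltnn; apply/esym/negbTE; rewrite -leqNgt.
- have -> : count (fun j => 0 < f j) (iota 0 N) = N.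
    rewrite -{2}(size_iota 0 N) -count_predT; apply: eq_in_count => j.
    rewrite mem_iota => /andP[_ jN] /=.
    exact: leq_trans fNp (mono_le mon (ltnW jN)).
  rewrite -[_ + true]/(N + 1) addn1 iN; apply: leq_trans fNp (mono_le mon _); lia.
Qed.

Lemma pofP f N : (forall i, f i.+1 <= f i) -> (forall i, N <= i -> f i = 0) ->
  [/\ is_part (pof f N), (forall i, nth 0 (pof f N) i = f i) & size (pof f N) <= N].
Proof.
move=> mon z.
have kN : count (fun j => 0 < f j) (iota 0 N) <= N.
  by rewrite -{2}(size_iota 0 N) count_size.
have nthE i : nth 0 (pof f N) i = f i.
  rewrite /pof; case: (ltnP i (count (fun j => 0 < f j) (iota 0 N))) => ik.
    by rewrite nth_mkseq.
  rewrite nth_default ?size_mkseq //.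
  case: (ltnP i N) => iN; last by rewrite z.
  by move: (pof_count mon iN); rewrite [X in _ = X]ltnNge ik /= => /negbT; rewrite -leqNgt leqn0 => /eqP.
split => //; last by rewrite size_mkseq.
apply: is_partI => [i|i]; rewrite ?nthE //.
rewrite size_mkseq => ik.
by rewrite (pof_count mon (leq_trans ik kN)).
Qed.

Definition addable (la : seq nat) i := (i == 0) || (nth 0 la i < nth 0 la i.-1).
Definition removable (la : seq nat) i := nth 0 la i.+1 < nth 0 la i.
Definition down (la : seq nat) i := pof (fun j => nth 0 la j - (i == j)) (size la).

Lemma addable_size la i : addable la i -> i <= size la.
Proof.
case/orP => [/eqP -> //|h]; case: i h => //= i h.
rewrite ltnNge; apply/negP => hs; move: h; rewrite [nth 0 la i]nth_default //.
Qed.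

Lemma sumn_incr la i : sumn (incr_nth la i) = (sumn la).+1.
Proof.
elim: la i => [|x la IH] [|i] //=; first by elim: i.
by rewrite IH addnS.
Qed.

Lemma up_part la i : is_part la -> addable la i -> is_part (incr_nth la i).
Proof.
move=> pl ad; apply: is_partI => [j|j]; rewrite !nth_incr_nth.
- case: (eqVneq i j.+1) => [e|ne].
  + move: ad; rewrite /addable e /= => h; rewrite add1n.
    have -> : (j.+1 == j) = false by rewrite eqn_leq ltnn.
    by [].
  + by rewrite add0n (leq_trans (part_mon pl (leqnSn j))) // leq_addl.
- rewrite size_incr_nth => hj.
  case: (ltnP j (size la)) => jl.
    by rewrite (part_size j pl) in jl; rewrite (leq_trans jl) // leq_addl.
  have hs := addable_size ad.
  move: hj; case: ifP => hi hj; first by lia.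
  by have -> : i == j by apply/eqP; lia.
Qed.

Lemma up_near la i : is_part la -> nearrow la (incr_nth la i).
Proof.
move=> pl; apply/nearrowP => //; split; last exact: sumn_incr.
by move=> j; rewrite nth_incr_nth leq_addl.
Qed.

Lemma near_up la nu : is_part la -> is_part nu -> nearrow la nu ->
  exists2 i, addable la i & nu = incr_nth la i.
Proof.
move=> pl pn /(nearrowP _ pl) [le e].
have : has (fun i => nth 0 la i < nth 0 nu i) (iota 0 (size nu)).
  apply/negPn/negP => /hasPn h.
  have eq i : nth 0 la i = nth 0 nu i.
    case: (ltnP i (size nu)) => hi.
      have := h i; rewrite mem_iota hi /= => /(_ isT); rewrite -leqNgt => h2.
      by apply/eqP; rewrite eqn_leq le h2.
    by have := le i; rewrite [nth 0 nu i]nth_default // leqn0 => /eqP ->.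
  have : sumn nu <= sumn la by apply: pw_sum_le => i; rewrite eq.
  by rewrite e ltnn.
case/hasP => i _ hi.
have le2 : lep (incr_nth la i) nu.
  move=> j; rewrite nth_incr_nth; case: eqP => [<-|_] //; by rewrite add0n.
have eqs := pw_sum_eq le2 (etrans (sumn_incr la i) (esym e)).
have ad : addable la i.
  apply/orP; case: i hi le2 eqs => [|i] hi le2 eqs; [by left|right] => /=.
  have := part_mon pn (leqnSn i); rewrite -!eqs !nth_incr_nth eqxx.
  have -> : (i.+1 == i) = false by rewrite eqn_leq ltnn.
  by rewrite add1n.
exists i => //; apply: part_eq => //; try exact: up_part.
Qed.

Lemma removable_size la i : removable la i -> i < size la.
Proof.
rewrite /removable => h; rewrite ltnNge; apply/negP => hs.
by move: h; rewrite [nth 0 la i]nth_default // (leq_trans hs).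
Qed.

Lemma down_spec la i : is_part la -> removable la i ->
  [/\ is_part (down la i), (forall j, nth 0 (down la i) j = nth 0 la j - (i == j))
    & la = incr_nth (down la i) i].
Proof.
move=> pl rm.
have [p1 p2 _] : [/\ is_part (down la i), (forall j, nth 0 (down la i) j = nth 0 la j - (i == j))
    & size (down la i) <= size la].
  apply: pofP => [j|j hj]; last by rewrite nth_default.
  have mj := part_mon pl (leqnSn j); move: rm; rewrite /removable.
  case: (eqVneq i j) => [->|ne1].
    by rewrite (ltn_eqF (ltnSn j)) subn0; lia.
  case: (eqVneq i j.+1) => [->|ne2] _; last by rewrite !subn0.
  by rewrite subn0; exact: leq_trans (leq_subr _ _) mj.
have ad : addable (down la i) i.
  apply/orP; case: i rm p1 p2 => [|i] rm p1 p2; [by left | right] => /=.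
  rewrite !p2 eqxx; have -> : (i.+1 == i) = false by rewrite eqn_leq ltnn.
  have := part_mon pl (leqnSn i); move: rm; rewrite /removable; lia.
split => //; apply: part_eq => //; try exact: up_part.
move=> j; rewrite nth_incr_nth p2; case: eqP => [<-|_] /=; last by rewrite subn0.
move: rm; rewrite /removable; lia.
Qed.

Lemma down_near la i : is_part la -> removable la i -> nearrow (down la i) la.
Proof.
move=> pl rm; have [p1 _ e] := down_spec pl rm.
by rewrite {2}e; apply: up_near.
Qed.

Lemma near_down ka la : is_part ka -> is_part la -> nearrow ka la ->
  exists2 i, removable la i & ka = down la i.
Proof.
move=> pk pl h; have [i ad e] := near_up pk pl h.
have rm : removable la i.
  rewrite /removable e !nth_incr_nth eqxx.
  rewrite (ltn_eqF (ltnSn i)).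
  by rewrite add0n add1n ltnS part_mon.
exists i => //; have [p1 p2 _] := down_spec pl rm.
apply: part_eq => // j; rewrite p2 e nth_incr_nth.
by case: eqP => [_|_] /=; rewrite ?subn0 // add1n subn1.
Qed.

End Part2.

Section Sums.
Variable V : zmodType.
Local Open Scope nat_scope.

Lemma sum_up (G : seq nat -> V) la n : la \in Yn n ->
  (\sum_(nu <- Yn n.+1 | nearrow la nu) G nu =
   \sum_(i <- iota 0 (size la).+1 | addable la i) G (incr_nth la i))%R.
Proof.
rewrite memYn => /andP[pla /eqP sla].
rewrite -big_filter -[RHS]big_filter -(big_map (incr_nth la) xpredT G).
apply: perm_big; apply: uniq_perm.
- by rewrite filter_uniq // Yn_uniq.
- by rewrite (map_inj_uniq (@incr_nth_inj la)) filter_uniq // iota_uniq.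
move=> nu; rewrite mem_filter; apply/andP/mapP.
- case=> hn; rewrite memYn => /andP[pn _].
  have [i ad ->] := near_up pla pn hn.
  by exists i => //; rewrite mem_filter ad mem_iota /= ltnS addable_size.
- case=> i; rewrite mem_filter => /andP[ad _] ->; split; first exact: up_near.
  by rewrite memYn up_part //= sumn_incr sla.
Qed.

Lemma sum_down (G : seq nat -> V) la n : la \in Yn n ->
  (\sum_(ka <- Yn n.-1 | nearrow ka la) G ka =
   \sum_(i <- iota 0 (size la) | removable la i) G (down la i))%R.
Proof.
rewrite memYn => /andP[pla /eqP sla].
rewrite -big_filter -[RHS]big_filter -(big_map (down la) xpredT G).
apply: perm_big; apply: uniq_perm.
- by rewrite filter_uniq // Yn_uniq.
- rewrite map_inj_in_uniq ?filter_uniq ?iota_uniq //.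
  move=> i j; rewrite !mem_filter => /andP[ri _] /andP[rj _] e.
  have [_ _ ei] := down_spec pla ri; have [_ _ ej] := down_spec pla rj.
  by apply: (@incr_nth_inj (down la i)); rewrite -ei e -ej.
move=> ka; rewrite mem_filter; apply/andP/mapP.
- case=> hn; rewrite memYn => /andP[pk _].
  have [i rm ->] := near_down pk pla hn.
  by exists i => //; rewrite mem_filter rm mem_iota /= removable_size.
- case=> i; rewrite mem_filter => /andP[rm _] ->; split; first exact: down_near.
  have [p1 _ e] := down_spec pla rm.
  rewrite memYn p1 /= -sla {2}e sumn_incr.
  by [].
Qed.

End Sums.

Section Single.
Variable V : zmodType.
Lemma sum_single (T : eqType) (s : seq T) (P : pred T) (G : T -> V) a :
  uniq s -> (forall y, (y \in s) && P y = (y == a)) ->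
  (\sum_(y <- s | P y) G y = G a)%R.
Proof.
move=> us h.
have ain : a \in s by have := h a; rewrite eqxx => /andP[].
rewrite big_seq_cond (eq_bigl (fun y => y == a)); last by move=> y; exact: h.
rewrite big_mkcond (bigD1_seq a) //= eqxx big1 ?addr0 // => y /negbTE ->.
by [].
Qed.
End Single.

Section Poch.
Variable F : fieldType.
Local Open Scope ring_scope.

Lemma pochE (z : F) a b N : (size b <= N)%N ->
  poch z a b = \prod_(0 <= j < N) \prod_(nth 0%N a j <= k < nth 0%N b j) (z + k%:R - j%:R).
Proof.
move=> hN.
transitivity (\prod_(0 <= j < size b) \prod_(nth 0%N a j <= k < nth 0%N b j) (z + k%:R - j%:R)).
  by rewrite big_mkord.
rewrite (big_cat_nat (leq0n _) hN) /= [X in _ = _ * X]big1_seq ?mulr1 //.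
move=> j /andP[_]; rewrite mem_index_iota => /andP[hj _].
by rewrite [nth 0%N b j]nth_default // big_geq.
Qed.

Lemma poch_pt (z : F) a b i : (forall j, nth 0%N b j = (nth 0%N a j + (i == j))%N) ->
  (i < size b)%N -> poch z a b = z + (nth 0%N a i)%:R - i%:R.
Proof.
move=> e ib; rewrite (pochE z a (leqnn _)) (bigD1_seq i) ?mem_index_iota ?iota_uniq //=.
rewrite e eqxx addn1 big_nat1 big1_seq ?mulr1 // => j /andP[ne _].
by rewrite e eq_sym (negbTE ne) addn0 big_geq.
Qed.

Lemma poch_up (z : F) la i : addable la i ->
  poch z la (incr_nth la i) = z + (nth 0%N la i)%:R - i%:R.
Proof.
move=> ad; apply: poch_pt => [j|]; first by rewrite nth_incr_nth addnC.
rewrite size_incr_nth; have := addable_size ad; case: ifP => //; lia.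
Qed.

Lemma poch_down (z : F) la i : is_part la -> removable la i ->
  poch z (down la i) la = z + (nth 0%N la i)%:R - 1 - i%:R.
Proof.
move=> pl rm; have [p1 p2 e] := down_spec pl rm.
rewrite (@poch_pt z _ _ i) ?removable_size //; last first.
  by move=> j; rewrite {1}e nth_incr_nth addnC.
rewrite p2 eqxx natrB ?subr0 ?addrA //.
move: rm; rewrite /removable; lia.
Qed.

End Poch.

Section MaxMin.
Local Open Scope nat_scope.
Definition maxp a b := pof (fun j => maxn (nth 0 a j) (nth 0 b j)) (maxn (size a) (size b)).
Definition minp a b := pof (fun j => minn (nth 0 a j) (nth 0 b j)) (maxn (size a) (size b)).

Lemma maxpP a b : is_part a -> is_part b ->
  [/\ is_part (maxp a b), (forall j, nth 0 (maxp a b) j = maxn (nth 0 a j) (nth 0 b j))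
    & size (maxp a b) <= maxn (size a) (size b)].
Proof.
move=> pa pb; apply: pofP.
- move=> j; have := part_mon pa (leqnSn j); have := part_mon pb (leqnSn j); lia.
- by move=> j; rewrite geq_max => /andP[ha hb]; rewrite !nth_default.
Qed.

Lemma minpP a b : is_part a -> is_part b ->
  [/\ is_part (minp a b), (forall j, nth 0 (minp a b) j = minn (nth 0 a j) (nth 0 b j))
    & size (minp a b) <= maxn (size a) (size b)].
Proof.
move=> pa pb; apply: pofP.
- move=> j; have := part_mon pa (leqnSn j); have := part_mon pb (leqnSn j); lia.
- by move=> j; rewrite geq_max => /andP[ha hb]; rewrite !nth_default.
Qed.

Lemma sum_maxmin a b : is_part a -> is_part b ->
  sumn (maxp a b) + sumn (minp a b) = sumn a + sumn b.
Proof.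
move=> pa pb; have [_ h1 s1] := maxpP pa pb; have [_ h2 s2] := minpP pa pb.
set N := maxn (size a) (size b).
rewrite (sumn_nth s1) (sumn_nth s2) (@sumn_nth a N) ?leq_maxl // (@sumn_nth b N) ?leq_maxr //.
rewrite -!big_split /=; apply: eq_bigr => j _; rewrite h1 h2; lia.
Qed.

End MaxMin.

Section Comm.
Variable F : fieldType.
Variables z z' : F.
Local Open Scope ring_scope.

Definition W a b := poch z a b * poch z' a b.

Lemma poch_maxmin (y : F) la x : is_part la -> is_part x ->
  poch y la (maxp la x) = poch y (minp la x) x.
Proof.
move=> pl px; have [_ h1 s1] := maxpP pl px; have [_ h2 _] := minpP pl px.
rewrite (pochE _ _ s1) (@pochE _ _ _ _ (maxn (size la) (size x))) ?leq_maxr //.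
apply: eq_bigr => j _; rewrite h1 h2.
case: (leqP (nth 0%N la j) (nth 0%N x j)) => h //.
by rewrite !big_geq // ltnW.
Qed.

Lemma W_maxmin la x : is_part la -> is_part x -> W la (maxp la x) = W (minp la x) x.
Proof. by move=> pl px; rewrite /W !poch_maxmin. Qed.

Lemma A_off la x n : la \in Yn n -> x \in Yn n -> x != la ->
  \sum_(nu <- Yn n.+1 | nearrow la nu && nearrow x nu) W la nu =
  \sum_(ka <- Yn n.-1 | nearrow ka la && nearrow ka x) W ka x.
Proof.
rewrite !memYn => /andP[pl /eqP sl] /andP[px /eqP sx] ne.
have [pM hM sM] := maxpP pl px; have [pm hm sm] := minpP pl px.
have sMm := sum_maxmin pl px; rewrite sl sx in sMm.
have leM : lep la (maxp la x) by move=> j; rewrite hM leq_maxl.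
have leM2 : lep x (maxp la x) by move=> j; rewrite hM leq_maxr.
have lem : lep (minp la x) la by move=> j; rewrite hm geq_minl.
have lem2 : lep (minp la x) x by move=> j; rewrite hm geq_minr.
have sMge : (n < sumn (maxp la x))%N.
  rewrite ltn_neqAle -sl eq_sym (pw_sum_le leM) andbT; apply/negP => /eqP e.
  have e1 := pw_part_eq pl pM leM (esym e).
  have e2 : x = la.
    apply: pw_part_eq => //; first by rewrite e1.
    by rewrite sx sl.
  by rewrite e2 eqxx in ne.
have upM nu : nearrow la nu -> nearrow x nu -> lep (maxp la x) nu.
  move=> /(nearrowP _ pl)[h1 _] /(nearrowP _ px)[h2 _] j.
  by rewrite hM geq_max h1 h2.
have dnm ka : is_part ka -> nearrow ka la -> nearrow ka x -> lep ka (minp la x).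
  move=> pk /(nearrowP _ pk)[h1 _] /(nearrowP _ pk)[h2 _] j.
  by rewrite hm leq_min h1 h2.
case: (eqVneq (sumn (maxp la x)) n.+1) => eM.
- have em : sumn (minp la x) = n.-1 by lia.
  have n0 : (0 < n)%N by lia.
  rewrite (@sum_single _ _ _ _ _ (maxp la x)) ?Yn_uniq //; last first.
    move=> nu; apply/idP/idP.
    + case/andP; rewrite memYn => /andP[pn /eqP sn] /andP[h1 h2].
      by apply/eqP/esym; apply: pw_part_eq => //; [apply: upM | rewrite sn eM].
    + move/eqP => ->; rewrite memYn pM eM eqxx /=.
      by apply/andP; split; apply/nearrowP => //; split => //; rewrite eM ?sl ?sx.
  rewrite (@sum_single _ _ _ _ _ (minp la x)) ?Yn_uniq ?W_maxmin //.
  move=> ka; apply/idP/idP.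
  + case/andP; rewrite memYn => /andP[pk /eqP sk] /andP[h1 h2].
    by apply/eqP; apply: pw_part_eq => //; [apply: dnm | rewrite sk em].
  + move/eqP => ->; rewrite memYn pm em eqxx /=.
    by apply/andP; split; apply/nearrowP => //; split => //; rewrite em ?sl ?sx; lia.
- rewrite !big1_seq //.
  + move=> ka /andP[/andP[h1 h2]]; rewrite memYn => /andP[pk /eqP sk].
    have := pw_sum_le (dnm ka pk h1 h2); move: h1 => /(nearrowP _ pk)[_]; lia.
  + move=> nu /andP[/andP[h1 h2]]; rewrite memYn => /andP[pn /eqP sn].
    have := pw_sum_le (upM nu h1 h2); lia.
Qed.

End Comm.

Section Diag.
Variable F : fieldType.
Variables z z' : F.
Local Open Scope ring_scope.

Let f (c : F) := (z + c) * (z' + c).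

Lemma sum_lin (g : nat -> F) S :
  \sum_(0 <= i < S) (f (g i - i%:R) - f (g i - i%:R - 1)) =
  S%:R * (z + z') + 2 * \sum_(0 <= i < S) g i - S%:R ^+ 2.
Proof.
elim: S => [|S IH]; first by rewrite !big_geq // mulr0 mul0r expr2 mulr0 !subr0 addr0.
rewrite !big_nat_recr //= IH /f -[S.+1]addn1 natrD; ring.
Qed.

Lemma diag la n : la \in Yn n ->
  \sum_(nu <- Yn n.+1 | nearrow la nu) W z z' la nu -
  \sum_(ka <- Yn n.-1 | nearrow ka la) W z z' ka la = z * z' + 2 * n%:R.
Proof.
move=> hla; have := hla; rewrite memYn => /andP[pl /eqP sl].
rewrite (sum_up _ hla) (sum_down _ hla).
set S := size la.
pose a j : F := (nth 0%N la j)%:R - j%:R.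
have e1 : \sum_(i <- iota 0 S.+1 | addable la i) W z z' la (incr_nth la i) =
    f (a 0%N) + \sum_(i <- iota 0 S | removable la i) f (a i.+1).
  rewrite /= big_cons /addable eqxx /=.
  rewrite /W (poch_up z) ?poch_up /addable ?eqxx // /f /a !addrA; congr (_ + _).
  rewrite -[iota 1 S]/(iota (1 + 0) S) iotaDl big_map.
  apply: eq_big => i; first by rewrite /removable add1n.
  rewrite /removable add1n => rm.
  by rewrite !poch_up /addable /= ?rm ?orbT // !addrA.
have e2 : \sum_(i <- iota 0 S | removable la i) W z z' (down la i) la =
    \sum_(i <- iota 0 S | removable la i) f (a i - 1).
  apply: eq_bigr => i rm.
  rewrite /W !poch_down // /f /a.
  congr (_ * _); ring.
rewrite e1 e2 -addrA -sumrB big_mkcond /=.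
have -> : \sum_(i <- iota 0 S) (if removable la i then f (a i.+1) - f (a i - 1) else 0) =
    \sum_(0 <= i < S) ((f (a i.+1) - f (a i)) + (f (a i) - f (a i - 1))).
  rewrite /index_iota subn0; apply: eq_bigr => i _.
  case: ifP => rm; first by rewrite addrA subrK.
  have e : nth 0%N la i.+1 = nth 0%N la i.
    apply/eqP; rewrite eqn_leq part_mon //= leqNgt.
    by move: rm; rewrite /removable => ->.
  rewrite addrA subrK /a e -[i.+1]addn1 natrD /f; ring.
rewrite big_split /= telescope_sumr // sum_lin.
have -> : \sum_(0 <= i < S) ((nth 0%N la i)%:R : F) = n%:R.
  by rewrite -natr_sum -(sumn_nth (leqnn _)) sl.
rewrite /a [nth 0%N la S]nth_default // /f; ring.
Qed.

End Diag.

Section Dim.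
Local Open Scope nat_scope.

Lemma dimc_eq mu la : sumn mu = sumn la -> dimc mu la = (mu == la).
Proof. by rewrite /dimc => ->; rewrite leqnn subnn. Qed.

Lemma dimc_gt mu la : sumn la < sumn mu -> dimc mu la = 0.
Proof. by rewrite /dimc ltnNge => /negbTE ->. Qed.

Lemma dimc_rec mu la : sumn mu < sumn la ->
  dimc mu la = \sum_(ka <- Yn (sumn la).-1 | nearrow ka la) dimc mu ka.
Proof.
move=> lt; rewrite /dimc (ltnW lt).
case e: (sumn la - sumn mu) => [|k]; first by lia.
rewrite /= big_seq_cond [RHS]big_seq_cond; apply: eq_bigr => ka /andP[].
rewrite memYn => /andP[pk /eqP sk] _.
rewrite sk; have -> : (sumn mu <= (sumn la).-1) by lia.
by congr dimk; lia.
Qed.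

End Dim.

Section Star.
Variable F : fieldType.
Variables z z' : F.
Local Open Scope ring_scope.
Local Notation W := (W z z').

Lemma sum_eq_ind (T : eqType) (s : seq T) (P : pred T) (G : T -> F) a :
  uniq s -> a \in s ->
  \sum_(y <- s | P y) G y * (y == a)%:R = if P a then G a else 0.
Proof.
move=> us ain; rewrite big_mkcond (bigD1_seq a) //= eqxx mulr1 big1 ?addr0 //.
by move=> y /negbTE ->; rewrite mulr0 if_same.
Qed.

Lemma commute (g : seq nat -> F) la n : la \in Yn n ->
  \sum_(nu <- Yn n.+1 | nearrow la nu) W la nu * \sum_(ka <- Yn n | nearrow ka nu) g ka =
  \sum_(ka <- Yn n.-1 | nearrow ka la) \sum_(nu <- Yn n | nearrow ka nu) W ka nu * g nu
  + (z * z' + 2 * n%:R) * g la.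
Proof.
move=> hla.
have L : \sum_(nu <- Yn n.+1 | nearrow la nu) W la nu * \sum_(ka <- Yn n | nearrow ka nu) g ka =
   \sum_(x <- Yn n) g x * \sum_(nu <- Yn n.+1 | nearrow la nu && nearrow x nu) W la nu.
  rewrite (eq_bigr (fun nu => \sum_(ka <- Yn n | nearrow ka nu) W la nu * g ka)); last first.
    by move=> nu _; rewrite big_distrr.
  rewrite (exchange_big_dep xpredT) //=; apply: eq_bigr => x _.
  by rewrite big_distrr; apply: eq_bigr => nu _; rewrite mulrC.
have R : \sum_(ka <- Yn n.-1 | nearrow ka la) \sum_(nu <- Yn n | nearrow ka nu) W ka nu * g nu =
   \sum_(x <- Yn n) g x * \sum_(ka <- Yn n.-1 | nearrow ka la && nearrow ka x) W ka x.
  rewrite (exchange_big_dep xpredT) //=; apply: eq_bigr => x _.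
  by rewrite big_distrr; apply: eq_bigr => nu _; rewrite mulrC.
rewrite L R !(bigD1_seq la) ?Yn_uniq //=.
have -> : \sum_(i <- Yn n | i != la) g i * \sum_(nu <- Yn n.+1 | nearrow la nu && nearrow i nu) W la nu =
   \sum_(i <- Yn n | i != la) g i * \sum_(ka <- Yn n.-1 | nearrow ka la && nearrow ka i) W ka i.
  rewrite big_seq_cond [RHS]big_seq_cond; apply: eq_bigr => x /andP[hx ne].
  by rewrite A_off.
rewrite (eq_bigl (nearrow la)); last by move=> nu; rewrite andbb.
rewrite [X in _ = _ * X + _ + _](eq_bigl (fun ka => nearrow ka la)); last by move=> ka; rewrite andbb.
have := diag z z' hla; move=> /eqP; rewrite subr_eq => /eqP ->.
ring.
Qed.

Definition Dm mu la : F := (dimc mu la)%:R.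
Definition Ec n m : F := (n%:R + 1 - m%:R) * (z * z') + n%:R * (n%:R + 1) - m%:R * (m%:R - 1).

Lemma Dm_rec mu la : (sumn mu < sumn la)%N ->
  Dm mu la = \sum_(ka <- Yn (sumn la).-1 | nearrow ka la) Dm mu ka.
Proof. by move=> h; rewrite /Dm (dimc_rec h) natr_sum. Qed.

Lemma star n : forall la mu, la \in Yn n -> is_part mu ->
  \sum_(nu <- Yn n.+1 | nearrow la nu) W la nu * Dm mu nu =
  Dm mu la * Ec n (sumn mu) +
  \sum_(mub <- Yn (sumn mu).-1 | nearrow mub mu) W mub mu * Dm mub la.
Proof.
elim/ltn_ind: n => n IH la mu hla pmu.
have := hla; rewrite memYn => /andP[pl /eqP sl].
case: (ltngtP (sumn mu) n.+1) => hm; last first.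
- (* m = n+1 *)
  have mun : mu \in Yn n.+1 by rewrite memYn pmu hm eqxx.
  rewrite /Dm (dimc_gt (la := la)); last by rewrite sl hm.
  rewrite mul0r add0r hm /=.
  rewrite big_seq_cond (eq_bigr (fun nu => W la nu * (nu == mu)%:R)); last first.
    move=> nu /andP[]; rewrite memYn => /andP[_ /eqP sn] _.
    by rewrite dimc_eq ?sn ?hm // eq_sym.
  rewrite -big_seq_cond sum_eq_ind ?Yn_uniq //.
  rewrite big_seq_cond (eq_bigr (fun mub => W mub mu * (mub == la)%:R)); last first.
    move=> mub /andP[]; rewrite memYn => /andP[_ /eqP sb] _.
    by rewrite dimc_eq // sb sl.
  by rewrite -big_seq_cond sum_eq_ind ?Yn_uniq.
- (* m > n+1 *)
  rewrite big1_seq; last first.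
    move=> nu /andP[_]; rewrite memYn => /andP[_ /eqP sn].
    by rewrite /Dm dimc_gt ?mulr0 // sn.
  rewrite /Dm dimc_gt ?sl 1?ltnW // mul0r add0r big1_seq // => mub /andP[_].
  rewrite memYn => /andP[_ /eqP sb]; rewrite dimc_gt ?mulr0 // sl sb; lia.
- (* m <= n *)
  rewrite big_seq_cond (eq_bigr (fun nu => W la nu * \sum_(ka <- Yn n | nearrow ka nu) Dm mu ka)); last first.
    move=> nu /andP[]; rewrite memYn => /andP[_ /eqP sn] _.
    by rewrite (Dm_rec (la := nu)) ?sn.
  rewrite -big_seq_cond commute //.
  case: n IH hla sl hm => [|n] IH hla sl hm.
  + have m0 : sumn mu = 0%N by lia.
    rewrite big1_seq; last first.
      move=> ka /andP[h]; rewrite memYn => /andP[pk _].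
      by move: h => /(nearrowP _ pk)[_]; rewrite sl.
    rewrite [X in _ = _ + X]big1_seq; last first.
      move=> mub /andP[h]; rewrite memYn => /andP[pk _].
      by move: h => /(nearrowP _ pk)[_]; rewrite m0.
    by rewrite m0 /Ec; ring.
  + rewrite big_seq_cond (eq_bigr (fun ka => Dm mu ka * Ec n (sumn mu) +
       \sum_(mub <- Yn (sumn mu).-1 | nearrow mub mu) W mub mu * Dm mub ka)); last first.
      by move=> ka /andP[hk _]; apply: (IH n).
    rewrite -big_seq_cond big_split /= -big_distrl /=.
    have HS : (\sum_(ka <- Yn n | nearrow ka la) Dm mu ka) * Ec n (sumn mu) = Dm mu la * Ec n (sumn mu).
      case: (ltnP (sumn mu) n.+1) => h; first by rewrite (Dm_rec (la := la)) ?sl.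
      have e : sumn mu = n.+1 by lia.
      have -> : Ec n (sumn mu) = 0 by rewrite e /Ec -natr1; ring.
      by rewrite !mulr0.
    rewrite HS exchange_big /=.
    have -> : \sum_(j <- Yn (sumn mu).-1 | nearrow j mu) \sum_(i <- Yn n | nearrow i la) W j mu * Dm j i =
       \sum_(mub <- Yn (sumn mu).-1 | nearrow mub mu) W mub mu * Dm mub la.
      rewrite big_seq_cond [RHS]big_seq_cond; apply: eq_bigr => mub /andP[].
      rewrite memYn => /andP[pb _] /(nearrowP _ pb)[_ sb].
      by rewrite -big_distrr /= (Dm_rec (la := la)) ?sl //; lia.
    rewrite /Ec -!natr1; ring.
Qed.

End Star.

Lemma dimY_gt0 n : forall la, la \in Yn n -> (0 < dimY la)%N.
Proof.
elim: n => [|n IH] la; rewrite memYn => /andP[pl /eqP sl].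
  have : size la == 0%N by rewrite -leqn0 -sl size_le_sumn.
  by rewrite size_eq0 => /eqP ->.
rewrite /dimY dimc_rec sl //=.
have S0 : (0 < size la)%N by rewrite (part_size 0 pl); case: la pl sl => //= x l /andP[_ /andP[]].
set i := (size la).-1.
have rm : removable la i.
  rewrite /removable /i prednK // [nth 0%N la (size la)]nth_default //.
  by rewrite -(part_size _ pl) prednK.
have [pk _ e] := down_spec pl rm.
have hk : down la i \in Yn n.
  by rewrite memYn pk /=; move: sl; rewrite {1}e sumn_incr => -[->].
rewrite big_mkcond (bigD1_seq (down la i)) ?Yn_uniq //= down_near //.
exact: ltn_addr (IH _ hk).
Qed.

Lemma adm_pos (R : rcfType) (z z' : R[i]) : admissible z z' -> (0 < z * z')%R.
Proof.
case=> [[hz ->]|[N [hz [hz' [/andP[a1 a2] /andP[b1 b2]]]]]].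
- case: z hz => a b /= hb; rewrite ltcE /=.
  have -> : (a * - b + b * a = 0)%R by ring.
  rewrite eqxx /=.
  have : (0 < b * b)%R.
    by rewrite -expr2 lt_def sqrf_eq0 hb sqr_ge0.
  nra.
- move: hz hz' a1 a2 b1 b2; case: z => a b; case: z' => c d /= -> -> a1 a2 b1 b2.
  rewrite ltcE /= !mul0r !mulr0 subr0 addr0 eqxx /=.
  case: (lerP 0 N) => hN.
  + have : (0 <= N%:~R :> R)%R by rewrite ler0z.
    nra.
  + have : ((N + 1)%:~R <= 0 :> R)%R by rewrite lerz0; lia.
    nra.
Qed.

Local Open Scope ring_scope.

Lemma ffact_pred (F : fieldType) n m : (0 < m)%N ->
  ((n ^_ m)%:R : F) = (n ^_ m.-1)%:R * (n.+1%:R - m%:R).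
Proof.
case: m => // k _ /=; rewrite ffactnSr.
case: (leqP k n) => h; first by rewrite natrM natrB // -!natr1; ring.
rewrite ffact_small // !mul0r //.
Qed.

Unset Implicit Arguments.

Theorem lemma5p2 (R : rcfType) (z z' : R[i]) (mu : seq nat) (n : nat)
  (la : seq nat) :
  admissible z z' -> is_part mu -> (1 <= n)%N -> la \in Yn n ->
  let m := sumn mu in
  Tn z z' n (FS _ mu) la - FS _ mu la =
    - ((m%:R * (m%:R - 1 + z * z')) / (n.+1%:R * (z * z' + n%:R))) * FS _ mu la
    + ((n.+1%:R - m%:R) / (n.+1%:R * (z * z' + n%:R))) *
      \sum_(mub <- Yn m.-1 | nearrow mub mu)
         poch z mub mu * poch z' mub mu * FS _ mub la.
Proof.
move=> adm pmu n1 hla m; rewrite {}/m.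
pose C := (R[i] : fieldType).
have := hla; rewrite memYn => /andP[pl /eqP sl].
have zn : z * z' + n%:R != 0.
  by rewrite gt_eqF // ltr_wpDr // adm_pos.
have n10 : (n.+1%:R : R[i]) != 0 by rewrite pnatr_eq0.
have n10' : (1 + n%:R : R[i]) != 0 by rewrite addrC natr1 pnatr_eq0.
have dnz k x : x \in Yn k -> ((dimY x)%:R : R[i]) != 0.
  by move=> hx; rewrite pnatr_eq0 -lt0n (dimY_gt0 hx).
have dl := dnz _ _ hla.
have inner nu : nu \in Yn n.+1 ->
    \sum_(lt <- Yn n) pdown C nu lt * FS C mu lt = (n ^_ sumn mu)%:R * Dm C mu nu / (dimY nu)%:R.
  move=> hnu; have := hnu; rewrite memYn => /andP[pn /eqP sn].
  rewrite (eq_bigr (fun lt => if nearrow lt nu then (dimY lt)%:R / (dimY nu)%:R * FS C mu lt else 0)); last first.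
    by move=> lt _; rewrite /pdown; case: ifP => _; rewrite ?mul0r.
  rewrite -big_mkcond big_seq_cond.
  rewrite (eq_bigr (fun lt => (n ^_ sumn mu)%:R / (dimY nu)%:R * Dm C mu lt)); last first.
    move=> lt /andP[hlt _]; have := hlt; rewrite memYn => /andP[_ /eqP st].
    rewrite /FS /Dm st.
    by field; rewrite (dnz _ _ hnu) (dnz _ _ hlt).
  rewrite -big_seq_cond -big_distrr /=.
  case: (ltnP (sumn mu) n.+1) => hm.
    by rewrite (@Dm_rec C mu nu) ?sn // /=; field; rewrite (dnz _ _ hnu).
  by rewrite ffact_small // !mul0r.
have T1 : Tn z z' n (FS C mu) la =
   (n ^_ sumn mu)%:R / ((z * z' + n%:R) * n.+1%:R * (dimY la)%:R) *
   \sum_(nu <- Yn n.+1 | nearrow la nu) W z z' la nu * Dm C mu nu.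
  rewrite /Tn big_seq (eq_bigr (fun nu => if nearrow la nu then ((n ^_ sumn mu)%:R /
      ((z * z' + n%:R) * n.+1%:R * (dimY la)%:R)) * (W z z' la nu * Dm C mu nu) else 0)); last first.
    move=> nu hnu; rewrite inner // /pup sl; case: ifP => _; last by rewrite mul0r.
    by rewrite /W; field; rewrite ?zn ?n10 ?n10' ?dl ?(dnz _ _ hnu).
  by rewrite -big_seq -big_mkcond big_distrr.
have F1 : FS C mu la = (n ^_ sumn mu)%:R * Dm C mu la / (dimY la)%:R by rewrite /FS /Dm sl.
have S1 : \sum_(mub <- Yn (sumn mu).-1 | nearrow mub mu) poch z mub mu * poch z' mub mu * FS C mub la =
   (n ^_ (sumn mu).-1)%:R / (dimY la)%:R * \sum_(mub <- Yn (sumn mu).-1 | nearrow mub mu) W z z' mub mu * Dm C mub la.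
  rewrite big_distrr big_seq_cond [RHS]big_seq_cond; apply: eq_bigr => mub /andP[hb _].
  have := hb; rewrite memYn => /andP[_ /eqP sb].
  by rewrite /FS /Dm /W sb sl /=; field; rewrite ?dl.
rewrite T1 F1 S1 (star z z' hla pmu).
set Y := \sum_(mub <- _ | _) _.
case m0: (sumn mu) => [|k].
  have -> : Y = 0.
    rewrite /Y big1_seq // => mub /andP[h]; rewrite memYn => /andP[pb _].
    by move: h => /(nearrowP _ pb)[_]; rewrite m0.
  rewrite ffactn0 /Ec; field; by rewrite ?zn ?n10 ?n10' ?dl.
rewrite (ffact_pred _ _ (ltn0Sn k)) /=  /Ec.
field; by rewrite ?zn ?n10 ?n10' ?dl.
Qed.
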